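(* Let $A_\alpha$ be the adjacency operator with a periodic magnetic potential $\alpha$ on a periodic graph $\mathcal G$. Then its total bandwidth satisfies, for every $n\in\mathbb N$, $$\mathfrak S(A_\alpha)\ge\frac{\max\{\widetilde B_{\alpha,n}^+,2\widetilde B_{\alpha,n}^{odd}\}}{n\varkappa_+^{\,n-1}},\qquad \widetilde B_{\alpha,n}^+=\Big|\sum_{\mathbf c\in\mathcal C_n^+}\cos\alpha(\mathbf c)\Big|,\quad \widetilde B_{\alpha,n}^{odd}=\Big|\sum_{\mathbf c\in\mathcal C_n^{odd}}\cos\alpha(\mathbf c)\Big|.$$
   Context: Let $\Gamma\subset\mathbb R^d$ be a lattice with basis $\mathfrak a_1,\dots,\mathfrak a_d$ and fundamental cell $\Omega=\{\sum_sx_s\mathfrak a_s:(x_s)\in[0,1)^d\}$. Let $\mathcal G=(\mathcal V,\mathcal E)$ be a connected, locally finite, infinite graph embedded in $\mathbb R^d$ (loops, multiple edges allowed), invariant under $\Gamma$-translations, with finite quotient $\mathcal G_*=(\mathcal V_*,\mathcal E_* )$; $\nu=\#\mathcal V_*$. Oriented edges $\mathcal A,\mathcal A_*$; $\underline{\mathbf e}$ inverse; $\varkappa_x$ = number of oriented edges starting at $x$ (loops counted twice); $\varkappa_+=\max_{\mathcal V_*}\varkappa_x$. Edge index: $x=x_0+[x]$, $x_0\in\mathcal V\cap\Omega$, $[x]\in\Gamma$ with coordinates $[x]_{\mathbb A}\in\mathbb Z^d$; $\tau((x,y))=[y]_{\mathbb A}-[x]_{\mathbb A}$, defined on $\mathcal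 A_*$. Periodic magnetic potential $\alpha:\mathcal A\to\mathbb R$ with $\alpha(\underline{\mathbf e})=-\alpha(\mathbf e)$, $\Gamma$-invariant. $(A_\alpha f)_x=\sum_{\mathbf e=(x,y)\in\mathcal A}e^{i\alpha(\mathbf e)}f_y$ on $\ell^2(\mathcal V)$; fiber operators $(A_\alpha(k)f)_x=\sum_{\mathbf e=(x,y)\in\mathcal A_*}e^{i(\alpha(\mathbf e)+\langle\tau(\mathbf e),k\rangle)}f_y$ on $\mathbb C^\nu$, $k\in\mathbb T^d=\mathbb R^d/(2\pi\mathbb Z)^d$, with eigenvalues $\lambda^o_{\alpha,1}(k)\le\dots\le\lambda^o_{\alpha,\nu}(k)$; bands $\sigma_j(A_\alpha)=\lambda^o_{\alpha,j}(\mathbb T^d)$; $\mathfrak S(A_\alpha)=\sum_j|\sigma_j(A_\alpha)|$. Cycles of $\mathcal G_*$: ordered sequences of oriented edges $(\mathbf e_1,\dots,\mathbf e_n)$, $\mathbf e_s=(x_{s-1},x_s)$, $x_n=x_0$ (cyclic shifts distinct, backtracking allowed); index $\tau(\mathbf c)=\sum\tau(\mathbf e)$; flux $\alpha(\mathbf c)=(\sum\alpha(\mathbf e))\bmod 2\pi$. $\mathcal C_n^+$: cycles of length $n$ with non-zero index; $\mathcal C_n^{odd}$: cycles of length $n$ with $\langle\tau(\mathbf c),(1,\dots,1)\rangle$ odd. *)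

(* Defs.v *)
From HB Require Import structures.
From mathcomp Require Import all_boot all_order all_algebra.
From mathcomp Require Import all_classical all_reals all_analysis.
From mathcomp Require Import complex.
From Stdlib Require Import Relations.Relation_Operators.

Set Implicit Arguments.
Unset Strict Implicit.
Unset Printing Implicit Defensive.

Import Order.TTheory GRing.Theory Num.Theory.
Local Open Scope ring_scope.

(* A Z^d-periodic graph G is described by its finite quotient G_* :
   vertices 'I_nu (nu = #V_* ), a finite type E of ORIENTED edges of G_* 
   (the set A_* of the paper ), source/target maps, the edge inversion e |-> \underline e
   (a fixed-point-free involution reversing orientation; a loop gives two
   distinct oriented edges, so loops are counted twice in kappa_x), and the
   edge index tau : E -> Z^d (a row vector of integers).
   G itself is the derived graph on 'I_nu * Z^d: the oriented edge e of G_*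
   lifts to the edges (src e, m) -> (tgt e, m + tau e), m in Z^d.         *)

Section PeriodicGraph.

Variables (E : finType) (nu d : nat).
Variables (src tgt : E -> 'I_nu) (inv : E -> E) (tau : E -> 'rV[int]_d).

Definition periodic_graph_axioms : Prop :=
  [/\ forall e, inv (inv e) = e,
      forall e, inv e <> e,
      forall e, src (inv e) = tgt e,
      forall e, tgt (inv e) = src e &
      forall e, tau (inv e) = - tau e].

Definition lift_edge (p q : 'I_nu * 'rV[int]_d) : Prop :=
  exists e, [/\ src e = p.1, tgt e = q.1 & q.2 = p.2 + tau e].

Definition lift_connected : Prop :=
  forall p q, clos_refl_trans _ lift_edge p q.

Definition kappa (x : 'I_nu) : nat := #|[set e | src e == x]|.
Definition kappa_plus : nat := \max_(x < nu) kappa x.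

Definition is_cycle n (c : {ffun 'I_n -> E}) : bool :=
  [forall i, tgt (c i) == src (c (ordS i))].

Definition cycle_index n (c : {ffun 'I_n -> E}) : 'rV[int]_d :=
  \sum_(i < n) tau (c i).

Definition cycle_odd n (c : {ffun 'I_n -> E}) : bool :=
  odd (absz (\sum_(j < d) cycle_index c 0 j)).

Variable R : realType.
Variable alpha : E -> R.

Definition magnetic_axiom : Prop := forall e, alpha (inv e) = - alpha e.

(* flux (a representative; only cos of it is used) *)
Definition cycle_flux n (c : {ffun 'I_n -> E}) : R := \sum_(i < n) alpha (c i).

Definition B_plus n : R :=
  `| \sum_(c : {ffun 'I_n -> E} | is_cycle c && (cycle_index c != 0))
        cos (cycle_flux c) |.

Definition B_odd n : R :=
  `| \sum_(c : {ffun 'I_n -> E} | is_cycle c && cycle_odd c)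
        cos (cycle_flux c) |.

Definition expi (t : R) : R[i] := (cos t +i* sin t)%C.

(* fiber operator A_alpha(k), k in R^d (k and k + 2 pi Z^d give the same
   operator, so ranging over R^d is ranging over the torus T^d) *)
Definition fiber_op (k : 'rV[R]_d) : 'M[R[i]]_nu :=
  \matrix_(x, y) \sum_(e | (src e == x) && (tgt e == y))
      expi (alpha e + \sum_(j < d) (tau e 0 j)%:~R * k 0 j).

End PeriodicGraph.

(* Eigenvalues of a square complex matrix counted with multiplicity:
   the roots of its characteristic polynomial.                         *)

Lemma char_poly_split (F : closedFieldType) n (A : 'M[F]_n) :
  exists s : seq F, char_poly A == \prod_(z <- s) ('X - z%:P).
Proof.
have [s Hs] := closed_field_poly_normal (char_poly A).
by exists s; apply/eqP; rewrite [LHS]Hs (monicP (char_poly_monic A)) scale1r.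
Qed.

Definition eig_roots (R : realType) n (A : 'M[R[i]]_n) : seq R[i] :=
  xchoose (char_poly_split A).

(* the eigenvalues (real parts; they are real for hermitian A) in
   increasing order, with multiplicity *)
Definition eigvals (R : realType) n (A : 'M[R[i]]_n) : seq R :=
  sort <=%R (map (@complex.Re R) (eig_roots A)).

(* lambda_{j+1}(A), j = 0 .. n-1 : the (j+1)-th smallest eigenvalue *)
Definition eigval (R : realType) n (A : 'M[R[i]]_n) (j : nat) : R :=
  nth 0 (eigvals A) j.

Section Bands.
Variables (E : finType) (nu d : nat).
Variables (src tgt : E -> 'I_nu) (tau : E -> 'rV[int]_d).
Variables (R : realType) (alpha : E -> R).

Definition band (j : nat) : set R :=
  range (fun k : 'rV[R]_d => eigval (fiber_op src tgt tau alpha k) j).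

Definition band_length (j : nat) : R := sup (band j) - inf (band j).

Definition total_bandwidth : R := \sum_(j < nu) band_length j.

End Bands.

(* Main.v *)
Require Import Defs.
From HB Require Import structures.
From mathcomp Require Import all_boot all_order all_algebra.
From mathcomp Require Import all_classical all_reals all_analysis.
From mathcomp Require Import complex.
From mathcomp Require Import ring lra zify.
Import Order.TTheory GRing.Theory Num.Theory.
Import Normc.
Local Open Scope ring_scope.

Section Expi.
Variable R : realType.
Local Notation C := R[i].

Lemma expiD (a b : R) : expi (a + b) = expi a * expi b.
Proof. by rewrite /expi cosD sinD /=; congr (_ +i* _)%C; lra. Qed.

Lemma expi0 : expi (0 : R) = 1.
Proof. by rewrite /expi cos0 sin0. Qed.

Lemma expi_sum (I : Type) (r : seq I) (P : pred I) (f : I -> R) :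
  \prod_(i <- r | P i) expi (f i) = expi (\sum_(i <- r | P i) f i).
Proof. by rewrite (big_morph (@expi R) expiD expi0). Qed.

Lemma conj_expi (a : R) : Num.conj (expi a) = expi (- a).
Proof. by rewrite /expi cosN sinN. Qed.

Lemma Re_expi (a : R) : complex.Re (expi a) = cos a.
Proof. by []. Qed.

Lemma norm_expi (a : R) : `|expi a| = 1.
Proof. by rewrite normc_def /= cos2Dsin2 sqrtr1. Qed.

Lemma cosDpin (a : R) n : cos (a + pi *+ n) = (-1) ^+ n * cos a.
Proof.
elim: n => [|n IH]; first by rewrite mulr0n addr0 expr0 mul1r.
by rewrite mulrSr addrA cosDpi IH exprS; lra.
Qed.

Lemma sinDpin (a : R) n : sin (a + pi *+ n) = (-1) ^+ n * sin a.
Proof.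
elim: n => [|n IH]; first by rewrite mulr0n addr0 expr0 mul1r.
by rewrite mulrSr addrA sinDpi IH exprS; lra.
Qed.

End Expi.

Section Graph.
Variables (R : realType) (d m : nat) (E : finType).
Variables (src tgt : E -> 'I_m.+1) (inv : E -> E) (tau : E -> 'rV[int]_d).
Variable (alpha : E -> R).
Hypothesis Hax : periodic_graph_axioms src tgt inv tau.
Hypothesis Hmag : magnetic_axiom inv alpha.

Local Notation C := R[i].
Definition wt (k : 'rV[R]_d) e := alpha e + \sum_(j < d) (tau e 0 j)%:~R * k 0 j.
Local Notation A k := (fiber_op src tgt tau alpha k).

Lemma einv_inj : injective inv.
Proof. by case: Hax => H _ _ _ _; apply: (can_inj H). Qed.

Lemma wt_inv k e : wt k (inv e) = - wt k e.
Proof.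
case: Hax => _ _ _ _ Ht; rewrite /wt Hmag Ht opprD -sumrN; congr (_ + _).
by apply: eq_bigr => j _; rewrite mxE rmorphN mulNr.
Qed.

Lemma A_entry k x y : A k x y = \sum_(e | (src e == x) && (tgt e == y)) expi (wt k e).
Proof. by rewrite mxE. Qed.

Lemma A_herm k : A k \is hermsymmx.
Proof.
apply/is_hermitianmxP; rewrite expr0 scale1r; apply/matrixP => x y.
rewrite !mxE rmorph_sum /= (reindex_inj einv_inj).
case: Hax => _ _ Hs Ht _.
apply: eq_big => [e|e _]; first by rewrite Hs Ht andbC.
by rewrite conj_expi -wt_inv.
Qed.

End Graph.

Lemma mxtrace_delta (F : pzRingType) p (x y : 'I_p) :
  \tr (delta_mx x y : 'M[F]_p) = (x == y)%:R.
Proof.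
rewrite /mxtrace (bigD1 x) //= big1 ?addr0; first by rewrite mxE eqxx.
by move=> i /negPf Hi; rewrite mxE Hi.
Qed.

Lemma prod_delta_nat (F : pzRingType) p (S T : nat -> 'I_p.+1) n :
  \prod_(i < n.+1) (delta_mx (S i) (T i) : 'M[F]_p.+1) =
  delta_mx (S 0%N) (T n) *+ (\big[andb/true]_(i < n) (T i == S i.+1)).
Proof.
elim: n => [|n IH]; first by rewrite big_ord1 big_ord0.
rewrite big_ord_recr /= IH big_ord_recr /= mulrnAl -mulmxE mul_delta_mx_cond.
by rewrite -mulrnA; case: (\big[andb/true]_(i < n) _); case: (T n == _).
Qed.

Lemma prod_scale (F : comNzRingType) p (I : Type) (r : seq I) (a : I -> F)
  (M : I -> 'M[F]_p.+1) :
  \prod_(i <- r) (a i *: M i) = (\prod_(i <- r) a i) *: \prod_(i <- r) M i.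
Proof.
elim: r => [|i r IH]; first by rewrite !big_nil scale1r.
by rewrite !big_cons IH -scalerAl -scalerAr scalerA.
Qed.

Section Graph.
Variables (R : realType) (d m : nat) (E : finType).
Variables (src tgt : E -> 'I_m.+1) (inv : E -> E) (tau : E -> 'rV[int]_d).
Variable (alpha : E -> R).

Local Notation C := R[i].
Local Notation wt := (@wt R d E tau alpha).
Local Notation A k := (fiber_op src tgt tau alpha k).

Lemma A_sum k : A k = \sum_e expi (wt k e) *: delta_mx (src e) (tgt e).
Proof.
apply/matrixP => x y; rewrite mxE summxE big_mkcond /=.
apply: eq_bigr => e _; rewrite !mxE.
by case: (src e =P x) => [->|/eqP Hx]; case: (tgt e =P y) => [->|/eqP Hy];
  rewrite ?eqxx ?mulr1 ?mulr0 //= 1?eq_sym ?(negPf Hx) ?(negPf Hy) ?andbF ?mulr0.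
Qed.

Lemma is_cycleE n (c : {ffun 'I_n.+1 -> E}) :
  is_cycle src tgt c =
  (\big[andb/true]_(i < n) (tgt (c (inord i)) == src (c (inord i.+1))))
  && (src (c (inord 0)) == tgt (c (inord n))).
Proof.
apply/forallP/andP => [H|[H1 H2] i].
  split; last first.
    have -> : (inord 0 : 'I_n.+1) = ordS ord_max.
      by apply/val_inj; rewrite /= inordK // modnn.
    have -> : (inord n : 'I_n.+1) = ord_max by apply/val_inj; rewrite /= inordK.
    by rewrite eq_sym H.
  rewrite big_andE; apply/forallP => i /=.
  have Hi := ltn_ord i.
  suff -> : (inord i.+1 : 'I_n.+1) = ordS (inord i) by apply: H.
  apply/val_inj; rewrite /= !inordK ?modn_small //; lia.
case: (ltnP i n) => Hi.
  move: H1; rewrite big_andE => /forallP /(_ (Ordinal Hi)) /= /eqP.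
  have -> : (inord i : 'I_n.+1) = i by apply/val_inj; rewrite /= inordK.
  move=> ->; apply/eqP; congr (src (c _)); apply/val_inj => /=.
  by rewrite inordK ?modn_small ?ltnS.
have Hin : i = ord_max by apply/val_inj => /=; apply/eqP; rewrite eqn_leq Hi -ltnS ltn_ord.
move: H2; rewrite eq_sym => /eqP; rewrite Hin.
have -> : (inord n : 'I_n.+1) = ord_max by apply/val_inj; rewrite /= inordK.
move=> ->; apply/eqP; congr (src (c _)); apply/val_inj => /=.
by rewrite inordK // modnn.
Qed.

Lemma trace_formula k n :
  \tr (A k ^+ n.+1) = \sum_(c : {ffun 'I_n.+1 -> E} | is_cycle src tgt c)
     expi (\sum_(i < n.+1) wt k (c i)).
Proof.
have -> : A k ^+ n.+1 = \prod_(i < n.+1) A k.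
  elim: n.+1 => [|j IH]; first by rewrite big_ord0 expr0.
  by rewrite big_ord_recr /= -IH exprSr.
rewrite A_sum.
rewrite (bigA_distr_bigA (fun (i : 'I_n.+1) e => expi (wt k e) *: delta_mx (src e) (tgt e))).
rewrite raddf_sum /= [RHS]big_mkcond /=; apply: eq_bigr => c _.
rewrite prod_scale mxtraceZ -expi_sum.
have -> : \prod_(i < n.+1) (delta_mx (src (c i)) (tgt (c i)) : 'M[R[i]]_m.+1) =
  \prod_(i < n.+1) delta_mx (src (c (inord i))) (tgt (c (inord i))).
  by apply: eq_bigr => i _; rewrite inord_val.
rewrite (@prod_delta_nat _ _ (fun i => src (c (inord i))) (fun i => tgt (c (inord i)))).
rewrite raddfMn /= mxtrace_delta is_cycleE andbC.
case: (_ == _); case: (\big[andb/true]_(i < n) _) => /=; by rewrite ?mulr1 ?mulr0.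
Qed.

End Graph.

Lemma char_poly_conj (F : fieldType) p (V B : 'M[F]_p) : V \in unitmx ->
  char_poly (invmx V *m B *m V) = char_poly B.
Proof.
move=> HV; rewrite /char_poly /char_poly_mx.
set W := invmx V.
have HWV : W *m V = 1%:M by rewrite mulVmx.
have HX : ('X%:M : 'M[{poly F}]_p) = map_mx polyC W *m 'X%:M *m map_mx polyC V.
  by rewrite scalar_mxC -mulmxA -map_mxM HWV map_mx1 mulmx1.
rewrite map_mxM map_mxM {1}HX -mulmxBl -mulmxBr !det_mulmx !det_map_mx.
rewrite mulrC mulrA -rmorphM -det_mulmx.
by rewrite /W mulmxV // det1 rmorph1 mul1r.
Qed.


Lemma conj_pow (F : comUnitRingType) p (V B : 'M[F]_p.+1) n : V \in unitmx ->
  (invmx V *m B *m V) ^+ n = invmx V *m B ^+ n *m V.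
Proof.
move=> HV; elim: n => [|n IH]; first by rewrite !expr0 mulmx1 mulVmx.
rewrite exprS IH exprS -!mulmxE !mulmxA; congr (_ *m _).
by rewrite -!mulmxA mulKVmx.
Qed.

Lemma diag_pow (F : pzRingType) p (D : 'rV[F]_p.+1) n :
  diag_mx D ^+ n = diag_mx (\row_j D 0 j ^+ n).
Proof.
elim: n => [|n IH].
  by apply/matrixP => i j; rewrite !mxE expr0.
rewrite exprS IH -mulmxE mulmx_diag; congr diag_mx; apply/rowP => j.
by rewrite !mxE exprS.
Qed.

Section Spec.
Variables (R : realType) (m : nat) (A : 'M[R[i]]_m.+1).
Hypothesis HA : A \is hermsymmx.

Let P := spectralmx A.
Let D := spectral_diag A.

Lemma A_spec : A = invmx P *m diag_mx D *m P.
Proof. by apply/orthomx_spectralP; apply: hermitian_normalmx. Qed.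

Lemma P_unit : P \in unitmx.
Proof. exact: spectral_unit. Qed.

Lemma char_poly_A : char_poly A = \prod_(i < m.+1) ('X - (D 0 i)%:P).
Proof.
rewrite A_spec char_poly_conj ?P_unit // char_poly_trig ?diag_mx_is_trig //.
by apply: eq_bigr => i _; rewrite mxE eqxx mulr1n.
Qed.

Lemma roots_perm : perm_eq (eig_roots A) [seq D 0 i | i <- index_enum 'I_m.+1].
Proof.
apply: prod_XsubC_eq; rewrite big_map -char_poly_A.
by rewrite /eig_roots; move: (xchooseP (char_poly_split A)) => /eqP <-.
Qed.

Lemma trace_pow n : \tr (A ^+ n) = \sum_(r <- eig_roots A) r ^+ n.
Proof.
rewrite (perm_big _ roots_perm) big_map.
rewrite A_spec conj_pow ?P_unit // diag_pow mxtrace_mulC mulmxA mulmxV ?P_unit //.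
rewrite mul1mx mxtrace_diag; apply: eq_bigr => i _; by rewrite mxE.
Qed.

Lemma roots_real r : r \in eig_roots A -> r \is Num.real.
Proof.
rewrite (perm_mem roots_perm) => /mapP [i _ ->].
by have /mxOverP := hermitian_spectral_diag_real HA; apply.
Qed.

Lemma roots_eigen r : r \in eig_roots A -> eigenvalue A r.
Proof.
move=> Hr; rewrite eigenvalue_root_char.
by move: (xchooseP (char_poly_split A)) => /eqP ->; rewrite root_prod_XsubC.
Qed.

Lemma size_roots : size (eig_roots A) = m.+1.
Proof.
have := size_char_poly A; move: (xchooseP (char_poly_split A)) => /eqP ->.
by rewrite size_prod_XsubC => -[].
Qed.

End Spec.

Section NormcLemmas.
Variable R : realType.

Lemma normc_ge0 (x : R[i]) : 0 <= normc x.
Proof. by case: x => a b /=; apply: sqrtr_ge0. Qed.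

Lemma normc_sum (I : Type) (r : seq I) (P : pred I) (f : I -> R[i]) :
  normc (\sum_(i <- r | P i) f i) <= \sum_(i <- r | P i) normc (f i).
Proof.
elim/big_rec2: _ => [|i y1 y2 _ IH]; first by rewrite normc0.
by apply: le_trans (le_normcD _ _) _; rewrite lerD2l.
Qed.

Lemma normc_expi (a : R) : normc (expi a) = 1.
Proof. by rewrite /expi /= cos2Dsin2 sqrtr1. Qed.

Lemma Re_le_normc (z : R[i]) : `|complex.Re z| <= normc z.
Proof.
case: z => a b /=; rewrite -sqrtr_sqr ler_sqrt ?lerDl ?sqr_ge0 //.
by rewrite addr_ge0 ?sqr_ge0.
Qed.

End NormcLemmas.

Section Graph.
Variables (R : realType) (d m : nat) (E : finType).
Variables (src tgt : E -> 'I_m.+1) (inv : E -> E) (tau : E -> 'rV[int]_d).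
Variable (alpha : E -> R).
Hypothesis Hax : periodic_graph_axioms src tgt inv tau.
Local Notation A k := (fiber_op src tgt tau alpha k).

Lemma col_count k y : \sum_x normc (A k x y) <= (kappa src y)%:R.
Proof.
under eq_bigr => x _ do rewrite mxE.
apply: (@le_trans _ _ (\sum_x \sum_(e | (src e == x) && (tgt e == y)) (1 : R))).
  apply: ler_sum => x _; apply: le_trans (normc_sum _ _ _ _ _) _.
  by apply: ler_sum => e _; rewrite normc_expi.
have HC : forall x, \sum_(e | (src e == x) && (tgt e == y)) (1:R) =
   \sum_(e | (tgt e == y) && (src e == x)) 1.
  by move=> x; apply: eq_bigl => e; rewrite andbC.
under eq_bigr => x _ do rewrite HC.
rewrite -(partition_big src (fun _ => true)) //=.
rewrite (reindex_inj (@einv_inj d m E src tgt inv tau Hax)).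
case: (Hax) => _ _ Hs Ht _.
rewrite (eq_bigl (fun e => e \in [set e | src e == y])); last first.
  by move=> e; rewrite inE Ht.
by rewrite sumr_const /kappa.
Qed.

Lemma eig_bound k r : eigenvalue (A k) r -> normc r <= (kappa_plus src)%:R.
Proof.
move/eigenvalueP => [v Hv vn0].
pose y := [arg max_(y > (ord0 : 'I_m.+1)) normc (v 0 y)]%O.
have Hmax : forall x, normc (v 0 x) <= normc (v 0 y).
  by rewrite /y; case: arg_maxP => // i _ H x; apply: H.
have vy0 : 0 < normc (v 0 y).
  rewrite lt_def normc_ge0 andbT; apply/negP => /eqP H0; move/negP: vn0; apply.
  apply/eqP/rowP => x; rewrite mxE; apply: eq0_normc; apply/eqP.
  by rewrite eq_le normc_ge0 andbT -H0 Hmax.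
have Hy : r * v 0 y = \sum_x v 0 x * A k x y.
  by have := congr1 (fun M : 'M[R[i]]_(1, m.+1) => M 0 y) Hv; rewrite !mxE => <-.
have H1 : normc r * normc (v 0 y) <= normc (v 0 y) * (kappa src y)%:R.
  rewrite -normcM Hy; apply: le_trans (normc_sum _ _ _ _ _) _.
  apply: (@le_trans _ _ (\sum_x normc (v 0 y) * normc (A k x y))).
    apply: ler_sum => x _; rewrite normcM ler_wpM2r ?normc_ge0 //.
  by rewrite -mulr_sumr ler_wpM2l ?normc_ge0 // col_count.
have H2 : normc r <= (kappa src y)%:R.
  by rewrite -(ler_pM2r vy0) [X in _ <= X]mulrC.

apply: le_trans H2 _; rewrite ler_nat /kappa_plus.
by rewrite (bigD1 y) //= leq_maxl.
Qed.

End Graph.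

Lemma Re_sum_real (R : realType) (s : seq R[i]) n :
  all (fun r => r \is Num.real) s ->
  complex.Re (\sum_(r <- s) r ^+ n) = \sum_(r <- s) (complex.Re r) ^+ n.
Proof.
elim: s => [|r s IH]; first by rewrite !big_nil.
move=> /andP [Hr Hs]; rewrite !big_cons -IH //.
rewrite -[in LHS](RRe_real Hr) -rmorphXn.
by case: (\sum_(j <- s) j ^+ n).
Qed.

Section Graph.
Variables (R : realType) (d m : nat) (E : finType).
Variables (src tgt : E -> 'I_m.+1) (inv : E -> E) (tau : E -> 'rV[int]_d).
Variable (alpha : E -> R).
Hypothesis Hax : periodic_graph_axioms src tgt inv tau.
Hypothesis Hmag : magnetic_axiom inv alpha.
Local Notation A k := (fiber_op src tgt tau alpha k).

Lemma Aherm k : A k \is hermsymmx.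
Proof. exact: (@A_herm R d m E src tgt inv tau alpha Hax Hmag k). Qed.

Lemma eigvals_size k : size (eigvals (A k)) = m.+1.
Proof. by rewrite /eigvals size_sort size_map size_roots. Qed.

Lemma eigval_bound k j : `|eigval (A k) j| <= (kappa_plus src)%:R.
Proof.
rewrite /eigval; case: (ltnP j (size (eigvals (A k)))) => Hj; last first.
  by rewrite nth_default // normr0 ler0n.
have := mem_nth 0 Hj; rewrite /eigvals mem_sort => /mapP [r Hr ->].
apply: le_trans (Re_le_normc _ _) _.
apply: (@eig_bound R d m E src tgt inv tau alpha Hax k r).
exact: (@roots_eigen R m (A k) r Hr).
Qed.

Lemma Re_trace k n : complex.Re (\tr (A k ^+ n)) = \sum_(j < m.+1) eigval (A k) j ^+ n.
Proof.
rewrite (@trace_pow R m (A k) (Aherm k)) Re_sum_real; last first.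
  by apply/allP => r Hr; apply: (@roots_real R m (A k) (Aherm k) r Hr).
have -> : \sum_(r <- eig_roots (A k)) complex.Re r ^+ n = \sum_(x <- eigvals (A k)) x ^+ n.
  by rewrite /eigvals (perm_big _ (permEl (perm_sort _ _))) big_map.
by rewrite (big_nth 0) eigvals_size big_mkord.
Qed.

End Graph.

Lemma pow_diff (R : realType) (a b c : R) n : `|a| <= c -> `|b| <= c ->
  `|a ^+ n.+1 - b ^+ n.+1| <= n.+1%:R * c ^+ n * `|a - b|.
Proof.
move=> Ha Hb; have c0 : 0 <= c by apply: le_trans Ha.
rewrite subrXX normrM mulrC ler_wpM2r //.
apply: le_trans (ler_norm_sum _ _ _) _.
apply: le_trans (_ : \sum_(i < n.+1) c ^+ n <= _); last first.
  by rewrite sumr_const card_ord mulr_natl.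
apply: ler_sum => i _; rewrite normrM !normrX.
have -> : c ^+ n = c ^+ (n.+1.-1 - i) * c ^+ i.
  by rewrite -exprD subnK //= -ltnS.
by apply: ler_pM; rewrite ?exprn_ge0 ?normr_ge0 ?lerXn2r ?nnegrE ?normr_ge0.
Qed.

Lemma dist_le {R : realType} {a b s i : R} :
  a <= s -> b <= s -> i <= a -> i <= b -> `|a - b| <= s - i.
Proof. move=> *; rewrite ler_norml; apply/andP; split; lra. Qed.

Section Graph.
Variables (R : realType) (d m : nat) (E : finType).
Variables (src tgt : E -> 'I_m.+1) (inv : E -> E) (tau : E -> 'rV[int]_d).
Variable (alpha : E -> R).
Hypothesis Hax : periodic_graph_axioms src tgt inv tau.
Hypothesis Hmag : magnetic_axiom inv alpha.
Local Notation A k := (fiber_op src tgt tau alpha k).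
Local Notation kp := ((kappa_plus src)%:R : R).

Lemma ev_bound k j : `|eigval (A k) j| <= kp.
Proof. exact: (@eigval_bound R d m E src tgt inv tau alpha Hax k j). Qed.

Lemma band_sup j : has_sup (band src tgt tau alpha j).
Proof.
split; first by exists (eigval (A 0) j); exists 0.
exists kp => _ [k _ <-]; apply: le_trans (ev_bound k j); exact: ler_norm.
Qed.

Lemma band_inf j : has_inf (band src tgt tau alpha j).
Proof.
split; first by exists (eigval (A 0) j); exists 0.
exists (- kp) => _ [k _ <-]; rewrite lerNl; apply: le_trans (ev_bound k j).
by rewrite -normrN ler_norm.
Qed.

Lemma band_len j k k' :
  `|eigval (A k) j - eigval (A k') j| <= band_length src tgt tau alpha j.
Proof.
have [_ Hs] := band_sup j; have [_ Hi] := band_inf j.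
have Hs1 := ub_le_sup Hs; have Hi1 := ge_inf Hi.
have a1 : eigval (A k) j <= sup (band src tgt tau alpha j) by apply: Hs1; exists k.
have b1 : eigval (A k') j <= sup (band src tgt tau alpha j) by apply: Hs1; exists k'.
have a2 : inf (band src tgt tau alpha j) <= eigval (A k) j by apply: Hi1; exists k.
have b2 : inf (band src tgt tau alpha j) <= eigval (A k') j by apply: Hi1; exists k'.
exact: (dist_le a1 b1 a2 b2).
Qed.

Lemma band_len_ge0 j : 0 <= band_length src tgt tau alpha j.
Proof. by apply: le_trans (band_len j 0 0); rewrite normr_ge0. Qed.

Lemma key_ineq k k' n :
  `|complex.Re (\tr (A k ^+ n.+1)) - complex.Re (\tr (A k' ^+ n.+1))| <=
  n.+1%:R * kp ^+ n * total_bandwidth src tgt tau alpha.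
Proof.
rewrite !(@Re_trace R d m E src tgt inv tau alpha Hax Hmag) -sumrB.
apply: le_trans (ler_norm_sum _ _ _) _.
rewrite /total_bandwidth mulr_sumr; apply: ler_sum => j _.
apply: le_trans (pow_diff _ _ _ _ _ (ev_bound k j) (ev_bound k' j)) _.
by rewrite ler_wpM2l ?band_len // mulr_ge0 ?exprn_ge0 ?ler0n.
Qed.

End Graph.

Lemma Re_sum {R : realType} (I : Type) (r : seq I) (P : pred I) (f : I -> R[i]) :
  complex.Re (\sum_(i <- r | P i) f i) = \sum_(i <- r | P i) complex.Re (f i).
Proof.
by apply: (big_morph (@complex.Re R)) => [[a b] [c e]|].
Qed.

Lemma cos_int {R : realType} (a : R) (z : int) :
  cos (a + z%:~R * pi) = (if odd (absz z) then -1 else 1) * cos a.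
Proof.
have sg n : (-1) ^+ n = (if odd n then -1 else 1 : R).
  by rewrite -signr_odd; case: (odd n); rewrite ?expr1 ?expr0.
case: z => n.
  by rewrite /= mulr_natl cosDpin sg.
have -> : (Negz n)%:~R * pi = - (pi *+ n.+1) :> R.
  by rewrite NegzE mulrNz pmulrn mulNr mulr_natl.
have := cosDpin _ (a - pi *+ n.+1) n.+1; rewrite subrK => ->.
rewrite -sg /= mulrA -exprD addnn -signr_odd odd_double expr0 mul1r.
by [].
Qed.

Section Graph.
Variables (R : realType) (d m : nat) (E : finType).
Variables (src tgt : E -> 'I_m.+1) (inv : E -> E) (tau : E -> 'rV[int]_d).
Variable (alpha : E -> R).
Hypothesis Hax : periodic_graph_axioms src tgt inv tau.
Hypothesis Hmag : magnetic_axiom inv alpha.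
Local Notation A k := (fiber_op src tgt tau alpha k).
Local Notation kp := ((kappa_plus src)%:R : R).

Lemma wt_sum n k (c : {ffun 'I_n -> E}) :
  \sum_(i < n) @wt R d E tau alpha k (c i) =
  cycle_flux alpha c + \sum_(j < d) (cycle_index tau c 0 j)%:~R * k 0 j.
Proof.
rewrite /wt big_split /=; congr (_ + _).
rewrite exchange_big /=; apply: eq_bigr => j _.
by rewrite /cycle_index summxE rmorph_sum mulr_suml.
Qed.

Lemma ReT k n :
  complex.Re (\tr (A k ^+ n.+1)) =
  \sum_(c : {ffun 'I_n.+1 -> E} | is_cycle src tgt c)
     cos (cycle_flux alpha c + \sum_(j < d) (cycle_index tau c 0 j)%:~R * k 0 j).
Proof.
rewrite trace_formula Re_sum; apply: eq_bigr => c _.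
by rewrite wt_sum Re_expi.
Qed.

Lemma odd_bound n :
  2 * B_odd src tgt tau alpha n.+1 <=
  n.+1%:R * kp ^+ n * total_bandwidth src tgt tau alpha.
Proof.
have H := @key_ineq R d m E src tgt inv tau alpha Hax Hmag 0 (const_mx pi) n.
rewrite !ReT in H; apply: le_trans H; rewrite -sumrB.
rewrite /B_odd -[2]normr_nat -normrM mulr_sumr.
rewrite [X in _ <= `|X|]big_mkcond [X in _ <= `|X|]big_mkcond /=.
rewrite le_eqVlt; apply/orP; left; apply/eqP; congr `|_|.
rewrite [LHS]big_mkcond; apply: eq_bigr => c _ /=.
have -> : \sum_(j < d) (cycle_index tau c 0 j)%:~R * (0 : 'rV[R]_d) 0 j = 0.
  by apply: big1 => j _; rewrite mxE mulr0.
have -> : \sum_(j < d) (cycle_index tau c 0 j)%:~R * (const_mx pi : 'rV[R]_d) 0 j =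
  (\sum_(j < d) cycle_index tau c 0 j)%:~R * pi.
  by rewrite rmorph_sum mulr_suml; apply: eq_bigr => j _; rewrite mxE.
rewrite cos_int addr0 /cycle_odd.
case: (is_cycle src tgt c) => //=.
case: (odd _) => /=; last by rewrite mul1r subrr.
by rewrite mulN1r opprK mulr_natl mulr2n.
Qed.

End Graph.

Section Roots.
Variable R : realType.

Lemma expiMn (x : R) s : expi (x *+ s) = expi x ^+ s.
Proof.
elim: s => [|s IH]; first by rewrite mulr0n expr0 expi0.
by rewrite mulrS expiD IH exprS.
Qed.

Lemma sin_int (z : int) : sin (z%:~R * pi : R) = 0.
Proof.
case: z => n.
  by have := sinDpin R 0 n; rewrite add0r sin0 mulr0 /= mulr_natl.
have -> : (Negz n)%:~R * pi = - (pi *+ n.+1) :> R.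
  by rewrite NegzE mulrNz pmulrn mulNr mulr_natl.
by rewrite sinN; have := sinDpin R 0 n.+1; rewrite add0r sin0 mulr0 => ->; rewrite oppr0.
Qed.

Lemma expi_2pi_int (z : int) : expi ((z * 2)%:~R * pi : R) = 1.
Proof.
rewrite /expi sin_int; have := cos_int (0 : R) (z * 2); rewrite add0r => ->.
by rewrite cos0 mulr1 abszM /= oddM andbF.
Qed.

Lemma cos_ne1 (N p : nat) : (0 < p)%N -> (p < N)%N ->
  cos (2 * pi * p%:R / N%:R : R) != 1.
Proof.
move=> p0 pN; pose x : R := pi * p%:R / N%:R.
have N0 : (0 : R) < N%:R by rewrite ltr0n; lia.
have xpos : 0 < x by rewrite /x divr_gt0 // mulr_gt0 ?pi_gt0 // ltr0n.
have xlt : x < pi.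
  rewrite /x ltr_pdivrMr // ltr_pM2l ?pi_gt0 // ltr_nat //.
have sx : 0 < sin x by apply: sin_gt0_pi; rewrite xpos xlt.
have -> : 2 * pi * p%:R / N%:R = x + x by rewrite /x; field; rewrite gt_eqF.
rewrite cosD; have := cos2Dsin2 x; move=> H.
apply/eqP => H2.
have : sin x ^+ 2 = 0 by lra.
by move/eqP; rewrite sqrf_eq0 gt_eqF.
Qed.

Lemma root_sum (N : nat) (z : int) : (0 < N)%N -> z != 0 -> (absz z < N)%N ->
  \sum_(s < N) expi (z%:~R * (2 * pi * s%:R / N%:R) : R) = 0.
Proof.
move=> N0 z0 zN.
have NR : (N%:R : R) != 0 by rewrite pnatr_eq0 -lt0n.
have c1 : cos (z%:~R * (2 * pi / N%:R) : R) != 1.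
  move: z0 zN; case: z => p /= Hp HpN.
    have -> : (Posz p)%:~R * (2 * pi / N%:R) = 2 * pi * p%:R / N%:R :> R by ring.
    by apply: cos_ne1 => //; rewrite lt0n.
  have -> : (Negz p)%:~R * (2 * pi / N%:R) = - (2 * pi * p.+1%:R / N%:R) :> R.
    by rewrite NegzE mulrNz pmulrn mulNr; ring.
  by rewrite cosN; apply: cos_ne1.
pose th : R := z%:~R * (2 * pi / N%:R).
have E1 : forall s : 'I_N, expi (z%:~R * (2 * pi * s%:R / N%:R)) = expi th ^+ s.
  by move=> s; rewrite -expiMn /th -mulr_natr; congr expi; ring.
under eq_bigr do rewrite E1.
have w1 : expi th != 1.
  by apply/eqP => H; move/eqP: c1; apply; rewrite -/th -Re_expi H.
have wN : expi th ^+ N = 1.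
  rewrite -expiMn -(expi_2pi_int z); congr expi.
  by rewrite /th -mulr_natr rmorphM /=; field.
by have := subrX1 (expi th) N; rewrite wN subrr => /esym /eqP;
  rewrite mulf_eq0 subr_eq0 (negPf w1) /= => /eqP.
Qed.

End Roots.

Section Avg.
Variables (R : realType) (d : nat).

Definition grid (N : nat) (t : {ffun 'I_d -> 'I_N}) : 'rV[R]_d :=
  \row_j (2 * pi * (t j)%:R / N%:R).

Lemma Re_mulrn (z : R[i]) n : complex.Re (z * n%:R) = complex.Re z * n%:R.
Proof.
have ReD : forall x y : R[i], complex.Re (x + y) = complex.Re x + complex.Re y.
  by move=> [? ?] [? ?].
rewrite !mulr_natr; elim: n => [|n IH]; first by rewrite !mulr0n.
by rewrite !mulrS -IH ReD.
Qed.

Lemma avg (N : nat) (a : R) (mv : 'rV[int]_d) : (0 < N)%N ->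
  (forall j, (absz (mv 0%R j) < N)%N) ->
  \sum_(t : {ffun 'I_d -> 'I_N}) cos (a + \sum_j (mv 0 j)%:~R * (grid N t) 0 j) =
  (if mv == 0 then (N ^ d)%:R * cos a else 0).
Proof.
move=> N0 HN.
have Hs : forall t : {ffun 'I_d -> 'I_N},
  cos (a + \sum_j (mv 0 j)%:~R * (grid N t) 0 j) =
  complex.Re (expi a * \prod_j expi ((mv 0 j)%:~R * (2 * pi * (t j)%:R / N%:R))).
  move=> t; rewrite expi_sum -expiD Re_expi; congr (cos (_ + _)).
  by apply: eq_bigr => j _; rewrite mxE.
under eq_bigr do rewrite Hs.
rewrite -Re_sum -mulr_sumr.
rewrite -(bigA_distr_bigA (fun j (s : 'I_N) => expi ((mv 0 j)%:~R * (2 * pi * s%:R / N%:R) : R))).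
case: eqP => [->|/eqP Hm].
  have -> : \prod_(j < d) \sum_(s < N) expi (((0 : 'rV[int]_d) 0 j)%:~R * (2 * pi * s%:R / N%:R) : R)
     = (N ^ d)%:R.
    under eq_bigr do under eq_bigr do rewrite mxE mul0r expi0.
    rewrite (eq_bigr (fun _ => N%:R)); last first.
      by move=> j _; rewrite sumr_const card_ord.
    by rewrite -(big_mkord xpredT (fun _ => (N%:R : R[i]))) prodr_const_nat subn0 natrX.
  by rewrite Re_mulrn Re_expi mulrC.
have [j0 Hj0] : exists j, mv 0 j != 0.
  apply/existsP; apply: contraR Hm; rewrite negb_exists => /forallP H.
  by apply/eqP/rowP => j; rewrite mxE; apply/eqP; rewrite -[_ == _]negbK H.
by rewrite (bigD1 j0) //= root_sum // mul0r mulr0.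
Qed.

End Avg.

Section Graph.
Variables (R : realType) (d m : nat) (E : finType).
Variables (src tgt : E -> 'I_m.+1) (inv : E -> E) (tau : E -> 'rV[int]_d).
Variable (alpha : E -> R).
Hypothesis Hax : periodic_graph_axioms src tgt inv tau.
Hypothesis Hmag : magnetic_axiom inv alpha.
Local Notation A k := (fiber_op src tgt tau alpha k).
Local Notation kp := ((kappa_plus src)%:R : R).

Lemma plus_bound n :
  B_plus src tgt tau alpha n.+1 <=
  n.+1%:R * kp ^+ n * total_bandwidth src tgt tau alpha.
Proof.
pose N := (\sum_(c : {ffun 'I_n.+1 -> E}) \sum_(j < d) absz (cycle_index tau c 0%R j)).+1.
have N0 : (0 < N)%N by [].
have HN : forall (c : {ffun 'I_n.+1 -> E}) j, (absz (cycle_index tau c 0%R j) < N)%N.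
  by move=> cc jj; rewrite /N ltnS (bigD1 cc) //= (bigD1 jj) //= -addnA leq_addr.
pose T k := complex.Re (\tr (A k ^+ n.+1)).
pose bnd := n.+1%:R * kp ^+ n * total_bandwidth src tgt tau alpha.
have Hk : forall t : {ffun 'I_d -> 'I_N}, `|T 0 - T (grid R d N t)| <= bnd.
  by move=> t; apply: (@key_ineq R d m E src tgt inv tau alpha Hax Hmag).
have Hsum : \sum_(t : {ffun 'I_d -> 'I_N}) (T 0 - T (grid R d N t)) =
   (N ^ d)%:R * \sum_(c : {ffun 'I_n.+1 -> E} | is_cycle src tgt c && (cycle_index tau c != 0))
                   cos (cycle_flux alpha c).
  rewrite /T; under eq_bigr do rewrite !ReT.
  rewrite sumrB sumr_const card_ffun !card_ord.
  rewrite exchange_big /=.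
  rewrite [X in _ - X = _](eq_bigr (fun c => if cycle_index tau c == 0
      then (N ^ d)%:R * cos (cycle_flux alpha c) else 0)); last first.
    by move=> c _; rewrite avg //; apply: HN.
  rewrite -sumrMnl -sumrB mulr_sumr [RHS]big_mkcond [LHS]big_mkcond /=.
  apply: eq_bigr => c _.
  have -> : \sum_(j < d) (cycle_index tau c 0 j)%:~R * (0 : 'rV[R]_d) 0 j = 0.
    by apply: big1 => j _; rewrite mxE mulr0.
  rewrite addr0; case: (is_cycle src tgt c) => //=.
  case: (cycle_index tau c == 0) => /=; last by rewrite subr0 mulr_natl.
  by rewrite mulr_natl subrr.
have Nd : (0 : R) < (N ^ d)%:R by rewrite ltr0n expn_gt0 N0.
rewrite /B_plus -(ler_pM2l Nd) -[X in X * `|_|]normr_nat.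
rewrite -normrM -Hsum; apply: le_trans (ler_norm_sum _ _ _) _.
apply: (@le_trans _ _ (\sum_(t : {ffun 'I_d -> 'I_N}) bnd)).
  by apply: ler_sum => t _; apply: Hk.
by rewrite sumr_const card_ffun !card_ord [X in _ <= X]mulr_natl.
Qed.

End Graph.

Theorem corollary4p1 (R : realType) (d nu : nat) (E : finType)
    (src tgt : E -> 'I_nu) (inv : E -> E) (tau : E -> 'rV[int]_d)
    (alpha : E -> R) (n : nat) :
  (0 < d)%N -> (0 < nu)%N ->
  periodic_graph_axioms src tgt inv tau ->
  lift_connected src tgt tau ->
  magnetic_axiom inv alpha ->
  (0 < n)%N ->
  Num.max (B_plus src tgt tau alpha n) (2 * B_odd src tgt tau alpha n)
    / (n%:R * (kappa_plus src)%:R ^+ n.-1)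
  <= total_bandwidth src tgt tau alpha.
Proof.
case: nu src tgt => [//|m] src tgt _ _ Hax _ Hmag.
case: n => [//|n] _ /=.
have Hp := @plus_bound R d m E src tgt inv tau alpha Hax Hmag n.
have Ho := @odd_bound R d m E src tgt inv tau alpha Hax Hmag n.
have S0 : 0 <= total_bandwidth src tgt tau alpha.
  by apply: sumr_ge0 => j _; apply: (@band_len_ge0 R d m E src tgt inv tau alpha Hax).
have D0 : 0 <= n.+1%:R * (kappa_plus src)%:R ^+ n :> R.
  by rewrite mulr_ge0 ?exprn_ge0 ?ler0n.
case: (eqVneq (n.+1%:R * (kappa_plus src)%:R ^+ n : R) 0) => [->|Hne].
  by rewrite invr0 mulr0.
have Dp : 0 < n.+1%:R * (kappa_plus src)%:R ^+ n :> R by rewrite lt_def Hne D0.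
rewrite ler_pdivrMr // ge_max [total_bandwidth _ _ _ _ * _]mulrC.
by rewrite Hp Ho.
Qed.
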